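(* Let $A\in N_n$ be a Belitskii canonical form under $B_n$-similarity. If $Q\in M_n(\mathbb F)$ is a subpermutation such that $A\in B_nQB_n=\{BQB': B,B'\in B_n\}$, then $A\in QU_n=\{QU:U\in U_n\}$.
   Context: $\mathbb F$ is a field. $B_n$ (resp. $U_n$, $N_n$) denotes the set of $n\times n$ invertible upper triangular (resp. upper triangular with all diagonal entries $1$, strictly upper triangular) matrices over $\mathbb F$. Matrices $A,C$ are $G$-similar for a group $G$ if $C=BAB^{-1}$ for some $B\in G$. A subpermutation is a matrix each of whose rows and columns has at most one nonzero entry, and that entry equals $1$. Belitskii order: on positions $\{(i,j):1\le i<j\le n\}$ define $(i,j)\prec(i',j')$ iff $i>i'$, or $i=i'$ and $j<j'$; thus $(n-1,n)\prec(n-2,n-1)\prec(n-2,n)\prec(n-3,n-2)\prec\cdots\prec(1,n)$. Belitskii's algorithm for $B_n$-similarity on $N_n$: given $A\in N_n$ put $A^{(0)}=A$, $G^{(0)}=B_n$. For $k=0,1,\dots$, let $(p,q)$ be the $(k+1)$th position in the Belitskii order and look at the $(p,q)$ entries of all matrices $G^{(k)}$-similar to $A^{(k)}$: (a) if this entry is always $0$, or can take every value in $\mathbb F$, choose $A^{(k+1)}$ $G^{(k)}$-similar to $A^{(k)}$ with $(p,q)$ entry $0$; (b) if it can take exactly the values in $\mathbb F\setminus\{0\}$, choose $A^{(k+1)}$ $G^{(k)}$-similar to $A^{(k)}$ with $(p,q)$ entry $1$; (c) otherwise the entry is a constant $\lambda\ne0$, and $A^{(k+1)}=A^{(k)}$.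 Let $G^{(k+1)}$ be the subgroup of $g\in G^{(k)}$ such that $gA^{(k+1)}g^{-1}$ has the same entries as $A^{(k+1)}$ in the first $k+1$ positions. After the last position, the resulting matrix $A^\infty$ is the Belitskii canonical form of $A$ under $B_n$-similarity. A matrix in $N_n$ is called a Belitskii canonical form if it is the Belitskii canonical form of some matrix in $N_n$. *)

(* Defs.v *)
From HB Require Import structures.
From mathcomp Require Import all_boot all_order all_algebra.
Set Implicit Arguments. Unset Strict Implicit. Unset Printing Implicit Defensive.
Import GRing.Theory.
Local Open Scope ring_scope.

Section Belitskii.
Variables (F : fieldType) (n : nat).

Definition inB (B : 'M[F]_n) : Prop :=
  B \in unitmx /\ forall i j : 'I_n, (j < i)%N -> B i j = 0.

Definition inU (U : 'M[F]_n) : Prop :=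
  (forall i j : 'I_n, (j < i)%N -> U i j = 0) /\ forall i : 'I_n, U i i = 1.

Definition inN (A : 'M[F]_n) : Prop :=
  forall i j : 'I_n, (j <= i)%N -> A i j = 0.

Definition subperm_mx (Q : 'M[F]_n) : Prop :=
  (forall i j, Q i j = 0 \/ Q i j = 1) /\
  (forall i j j', Q i j != 0 -> Q i j' != 0 -> j = j') /\
  (forall i i' j, Q i j != 0 -> Q i' j != 0 -> i = i').

Definition gsim (G : 'M[F]_n -> Prop) (A C : 'M[F]_n) : Prop :=
  exists g, G g /\ C = g *m A *m invmx g.

Definition bel_positions : seq ('I_n * 'I_n) :=
  [seq (i, j) | i : 'I_n <- rev (enum 'I_n), j : 'I_n <- filter (fun j : 'I_n => (i < j)%N) (enum 'I_n)].

(* A run of Belitskii's algorithm on A, with matrices As k = A^(k) and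
   groups Gs k = G^(k), ending with the matrix Ainf. *)
Definition belitskii_run (A : 'M[F]_n) (As : nat -> 'M[F]_n)
    (Gs : nat -> 'M[F]_n -> Prop) (Ainf : 'M[F]_n) : Prop :=
  As 0%N = A /\ (forall g, Gs 0%N g <-> inB g) /\
  (forall (k : nat) (p q : 'I_n), onth bel_positions k = Some (p, q) ->
     let vals := fun x : F => exists C, gsim (Gs k) (As k) C /\ C p q = x in
     ( ((forall x, vals x -> x = 0) \/ (forall x, vals x)) ->
         gsim (Gs k) (As k) (As k.+1) /\ As k.+1 p q = 0 ) /\
     ( ~ ((forall x, vals x -> x = 0) \/ (forall x, vals x)) ->
       (forall x, vals x <-> x != 0) ->
         gsim (Gs k) (As k) (As k.+1) /\ As k.+1 p q = 1 ) /\
     ( ~ ((forall x, vals x -> x = 0) \/ (forall x, vals x)) ->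
       ~ (forall x, vals x <-> x != 0) ->
         As k.+1 = As k ) /\
     (forall g, Gs k.+1 g <->
        (Gs k g /\ forall p' q', (p', q') \in take k.+1 bel_positions ->
           (g *m As k.+1 *m invmx g) p' q' = As k.+1 p' q'))) /\
  Ainf = As (size bel_positions).

Definition belitskii_canonical (Ainf : 'M[F]_n) : Prop :=
  exists A As Gs, inN A /\ belitskii_run A As Gs Ainf.

End Belitskii.

(* Main.v *)
Require Import Defs.
From mathcomp Require Import all_boot all_order all_algebra.
From Stdlib Require Import Classical.
From mathcomp Require Import zify.
Set Implicit Arguments. Unset Strict Implicit. Unset Printing Implicit Defensive.
Import GRing.Theory.
Local Open Scope ring_scope.
Section Aux.
Variables (F : fieldType) (n : nat).

Definition upper (B : 'M[F]_n) := forall i j : 'I_n, (j < i)%N -> B i j = 0.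

Lemma upper_mul (A B : 'M[F]_n) : upper A -> upper B -> upper (A *m B).
Proof.
move=> hA hB i j lt_ji; rewrite mxE big1 // => k _.
case: (ltnP k i) => h; first by rewrite hA // mul0r.
by rewrite hB ?mulr0 //; exact: leq_trans lt_ji h.
Qed.

Lemma upper_diag (B : 'M[F]_n) : upper B -> B \in unitmx -> forall i, B i i != 0.
Proof.
move=> hB uB i; move: uB; rewrite unitmxE -det_tr det_trig; last first.
  by apply/is_trig_mxP => a b ab; rewrite mxE hB.
rewrite unitfE => /prodf_neq0 /(_ i isT); by rewrite mxE.
Qed.

Lemma upper_inv (B : 'M[F]_n) : upper B -> B \in unitmx -> upper (invmx B).
Proof.
move=> hB uB.
suff H : forall m (i j : 'I_n), (j < m)%N -> (j < i)%N -> invmx B i j = 0.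
  by move=> i j ji; apply: (H j.+1).
elim=> [|m IH] i j //; rewrite ltnS leq_eqVlt => /orP[/eqP jm|]; last exact: IH.
move=> ji; have := congr1 (fun M : 'M[F]_n => M i j) (mulVmx uB).
rewrite !mxE (bigD1 j) //= big1 ?addr0; last first.
  move=> k kj; case: (ltngtP k j) => h.
  - by rewrite (IH i k) ?mul0r // -?jm //; exact: ltn_trans h ji.
  - by rewrite hB ?mulr0.
  - by move: kj; rewrite (val_inj h) eqxx.
have -> : (i == j) = false by apply/negbTE; rewrite neq_ltn ji orbT.
move/eqP; rewrite mulf_eq0 (negbTE (upper_diag hB uB j)) orbF => /eqP //.
Qed.

Lemma inB_upper (B : 'M[F]_n) : inB B -> upper B.
Proof. by case. Qed.

Lemma inB_mul (A B : 'M[F]_n) : inB A -> inB B -> inB (A *m B).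
Proof.
move=> [uA hA] [uB hB]; split; first by rewrite unitmx_mul uA uB.
exact: upper_mul.
Qed.

Lemma inB_inv (B : 'M[F]_n) : inB B -> inB (invmx B).
Proof. move=> [uB hB]; split; [by rewrite unitmx_inv | exact: upper_inv]. Qed.

Lemma inN_conj (g X : 'M[F]_n) : inB g -> inN X -> inN (g *m X *m invmx g).
Proof.
move=> hg hX i j ji.
have hgi := inB_upper (inB_inv hg).
rewrite mxE big1 // => k _; rewrite mxE.
case: (ltnP j k) => jk.
  by rewrite hgi // mulr0.
rewrite big1 ?mul0r // => l _.
case: (ltnP l i) => li; first by rewrite (inB_upper hg) // mul0r.
by rewrite hX ?mulr0 //; apply: leq_trans jk (leq_trans ji li).
Qed.

Definition belt (x y : 'I_n * 'I_n) : bool :=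
  (y.1 < x.1)%N || ((x.1 == y.1) && (x.2 < y.2)%N).

Lemma bel_mem x : (x \in bel_positions n) = (x.1 < x.2)%N.
Proof.
apply/allpairsPdep/idP => [[i [j [_ ]]]|h].
  by rewrite mem_filter => /andP[ij _] ->.
by exists x.1, x.2; rewrite mem_rev mem_enum mem_filter mem_enum h; case: x {h}.
Qed.

Lemma bel_pairwise : pairwise belt (bel_positions n).
Proof.
rewrite /bel_positions.
have : pairwise (fun a b : 'I_n => (b < a)%N) (rev (enum 'I_n)).
  rewrite -sorted_pairwise; last by move=> a b c /= h1 h2; first [exact: ltn_trans h1 h2 | exact: ltn_trans h2 h1].
  rewrite rev_sorted.
  have := iota_ltn_sorted 0 n; rewrite -val_enum_ord.
  by rewrite sorted_map.
elim: (rev _) => [|i l IH] //= /andP[hi hl].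
rewrite pairwise_cat IH // andbT; apply/andP; split.
  apply/allrelP => x y /mapP[j _ ->] /allpairsPdep[i' [j' [i'l _ ->]]].
  by rewrite /belt /= (allP hi).
rewrite pairwise_map; apply: pairwise_filter.
have := iota_ltn_sorted 0 n; rewrite -val_enum_ord sorted_map sorted_pairwise //.
  by apply: sub_pairwise => a b /= ab; rewrite /belt /= ltnn eqxx.
by move=> a b c /= h1 h2; first [exact: ltn_trans h1 h2 | exact: ltn_trans h2 h1].
Qed.

Lemma belt_irr x : belt x x = false.
Proof. by rewrite /belt ltnn eqxx ltnn. Qed.

Lemma belt_asym x y : belt x y -> belt y x = false.
Proof.
rewrite /belt => /orP[h|/andP[/eqP e h]].
  rewrite (ltnNge x.1) (ltnW h) /=; apply/negbTE/negP => /andP[/eqP e _].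
  by move: h; rewrite e ltnn.
by rewrite e ltnn eqxx /= ltnNge (ltnW h).
Qed.

Lemma mem_take_nth (s : seq ('I_n * 'I_n)) k x :
  x \in take k s -> exists2 i, (i < k)%N & nth x s i = x /\ (i < size s)%N.
Proof.
move=> hx; exists (index x (take k s)).
  have := index_mem x (take k s); rewrite hx size_take.
  by case: ifP => // /negbT; rewrite -leqNgt => h1 h2; apply: leq_trans h2 h1.
have hi : (index x (take k s) < size (take k s))%N by rewrite index_mem.
have hik : (index x (take k s) < k)%N.
  by move: hi; rewrite size_take; case: ifP => // /negbT; rewrite -leqNgt => h1 h2; apply: leq_trans h2 h1.
split; first by rewrite -(nth_take _ hik) nth_index.
by move: hi; rewrite size_take; case: ifP => // h1 h2; apply: ltn_trans h2 h1.
Qed.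

Lemma bel_before k x x0 : (k < size (bel_positions n))%N ->
  x \in take k (bel_positions n) -> belt x (nth x0 (bel_positions n) k).
Proof.
move=> hk /mem_take_nth [i ik [<- isz]].
rewrite (set_nth_default x0 x isz).
have /(pairwiseP x0) P := bel_pairwise.
by apply: P.
Qed.

Lemma bel_closed m x y : y \in bel_positions n -> belt y x ->
  x \in take m (bel_positions n) -> y \in take m (bel_positions n).
Proof.
move=> hy hyx /mem_take_nth [j jm [hx jsz]].
set s := bel_positions n in hy hx jsz *.
have isz : (index y s < size s)%N by rewrite index_mem.
case: (ltngtP (index y s) j) => h.
- have him : (index y s < m)%N by exact: ltn_trans h jm.
  rewrite -(nth_index x hy) -(nth_take _ him).
  by apply: mem_nth; rewrite size_take; case: ifP.
- have /(pairwiseP x) P := bel_pairwise.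
  have := P j (index y s) jsz isz h.
  by rewrite hx nth_index // (belt_asym hyx).
- by move: hyx; rewrite -hx -h nth_index // belt_irr.
Qed.

Lemma bel_closed_nth k y x0 : (k < size (bel_positions n))%N ->
  y \in bel_positions n -> belt y (nth x0 (bel_positions n) k) ->
  y \in take k (bel_positions n).
Proof.
set s := bel_positions n => hk hy hyx.
have isz : (index y s < size s)%N by rewrite index_mem.
case: (ltngtP (index y s) k) => h.
- rewrite -(nth_index x0 hy) -(nth_take _ h).
  by apply: mem_nth; rewrite size_take; case: ifP.
- have /(pairwiseP x0) P := bel_pairwise.
  have := P k (index y s) hk isz h.
  by rewrite nth_index // (belt_asym hyx).
- by move: hyx; rewrite -h nth_index // belt_irr.
Qed.

Lemma nth_in_take k x0 : (k < size (bel_positions n))%N ->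
  nth x0 (bel_positions n) k \in take k.+1 (bel_positions n).
Proof.
move=> hk; rewrite -(nth_take _ (ltnSn k)).
by apply: mem_nth; rewrite size_take; case: ifP.
Qed.

End Aux.
Section Special.
Variables (F : fieldType) (n : nat).
Implicit Types X Y : 'M[F]_n.

Definition cj (g X : 'M[F]_n) := g *m X *m invmx g.

Lemma delta_mull (p r a c : 'I_n) X :
  (delta_mx p r *m X) a c = (a == p)%:R * X r c.
Proof.
rewrite mxE (bigD1 r) //= big1 ?addr0 => [|k kr]; rewrite mxE.
  by rewrite eqxx andbT.
by rewrite (negbTE kr) andbF mul0r.
Qed.

Lemma delta_mulr (p r a b : 'I_n) X :
  (X *m delta_mx p r) a b = X a p * (b == r)%:R.
Proof.
rewrite mxE (bigD1 p) //= big1 ?addr0 => [|k kp]; rewrite mxE.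
  by rewrite eqxx.
by rewrite (negbTE kp) mulr0.
Qed.

Lemma sum_dl (p r a c : 'I_n) X :
  \sum_j delta_mx p r a j * X j c = (a == p)%:R * X r c.
Proof. by have := delta_mull p r a c X; rewrite mxE. Qed.

Lemma sum_dr (p r a b : 'I_n) X :
  \sum_j X a j * delta_mx p r j b = X a p * (b == r)%:R.
Proof. by have := delta_mulr p r a b X; rewrite mxE. Qed.

Definition g1 (p r : 'I_n) (t : F) : 'M[F]_n := 1%:M + t *: delta_mx p r.
Definition g1' (p r : 'I_n) (t : F) : 'M[F]_n := 1%:M - t *: delta_mx p r.

Lemma g1K (p r : 'I_n) t : p != r -> g1 p r t *m g1' p r t = 1%:M.
Proof.
move=> pr; rewrite /g1 /g1' mulmxDl !mulmxBr !mul1mx mulmx1.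
rewrite -!scalemxAl -!scalemxAr mul_delta_mx_0 1?eq_sym //.
have -> : t *: (t *: (0:'M[F]_n)) = 0 by apply/matrixP => i j; rewrite !mxE !mulr0.
by rewrite subr0 subrK.
Qed.

Lemma g1_inv (p r : 'I_n) t : p != r -> invmx (g1 p r t) = g1' p r t.
Proof.
move=> pr; have h := g1K t pr; have [u _] := mulmx1_unit h.
by rewrite -[RHS](mulKmx u) h mulmx1.
Qed.

Lemma g1_inB (p r : 'I_n) t : (p < r)%N -> inB (g1 p r t).
Proof.
move=> pr; have pr' : p != r by rewrite neq_ltn pr.
split; first by have [u _] := mulmx1_unit (g1K t pr').
move=> i j ji; have ij : (i == j) = false by apply/eqP => e; move: ji; rewrite e ltnn.
rewrite !mxE ij mulr0n add0r.
case: (i =P p) => [ip|]; last by rewrite mulr0.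
case: (j =P r) => [jr|]; last by rewrite andbF mulr0.
by move: ji pr; rewrite ip jr => h1 h2; have := ltn_trans h1 h2; rewrite ltnn.
Qed.

Lemma cj_g1 (p r a b : 'I_n) t X : (p < r)%N -> inN X -> (p <= a)%N ->
  cj (g1 p r t) X a b = X a b + (a == p)%:R * (t * X r b).
Proof.
move=> pr hX pa; have pr' : p != r by rewrite neq_ltn pr.
rewrite /cj g1_inv // /g1 /g1' mulmxDl mul1mx mulmxBr mulmx1.
rewrite -!scalemxAl -!scalemxAr !mxE.
rewrite sum_dr !mxE sum_dl sum_dl (hX a p pa) (hX r p (ltnW pr)).
by rewrite !mulr0 addr0 mul0r mulr0 subr0 mulrCA.
Qed.

Definition dv (p : 'I_n) (x : F) : 'rV[F]_n := \row_i (if i == p then x else 1).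
Definition g2 (p : 'I_n) (x : F) : 'M[F]_n := diag_mx (dv p x).

Lemma g2K (p : 'I_n) x : x != 0 -> g2 p x *m g2 p x^-1 = 1%:M.
Proof.
move=> x0; rewrite /g2 mulmx_diag; apply/matrixP => i j; rewrite !mxE.
by case: (i =P p) => _; rewrite ?mulfV ?mulr1.
Qed.

Lemma g2_inv (p : 'I_n) x : x != 0 -> invmx (g2 p x) = g2 p x^-1.
Proof.
move=> x0; have h := g2K p x0; have [u _] := mulmx1_unit h.
by rewrite -[RHS](mulKmx u) h mulmx1.
Qed.

Lemma g2_inB (p : 'I_n) x : x != 0 -> inB (g2 p x).
Proof.
move=> x0; split; first by have [u _] := mulmx1_unit (g2K p x0).
move=> i j ji; have ij : (i == j) = false by apply/eqP => e; move: ji; rewrite e ltnn.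
by rewrite !mxE ij mulr0n.
Qed.

Lemma cj_g2 (p a b : 'I_n) x X : x != 0 ->
  cj (g2 p x) X a b = (if a == p then x else 1) * X a b * (if b == p then x^-1 else 1).
Proof.
move=> x0; rewrite /cj g2_inv // /g2 mul_diag_mx mul_mx_diag !mxE.
done.
Qed.

End Special.
Section Run.
Variables (F : fieldType) (n : nat) (A0 : 'M[F]_n) (As : nat -> 'M[F]_n)
  (Gs : nat -> 'M[F]_n -> Prop) (Ainf : 'M[F]_n).
Hypothesis hrun : belitskii_run A0 As Gs Ainf.
Hypothesis hA0 : inN A0.

Local Notation s := (bel_positions n).
Local Notation N := (size (bel_positions n)).
Local Notation conj := cj.

Lemma onth_ex k : (k < N)%N -> exists p q, onth s k = Some (p, q).
Proof.
move=> hk; have := onthTE s k; rewrite hk.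
by case: (onth s k) => [[p q]|] // _; exists p, q.
Qed.

Lemma Gs_succ k g : (k < N)%N -> (Gs k.+1 g <-> (Gs k g /\ forall p' q', (p', q') \in take k.+1 s ->
           conj g (As k.+1) p' q' = As k.+1 p' q')).
Proof.
move=> /onth_ex [p [q ho]].
case: hrun => _ [_ [Hstep _]].
by have [_ [_ [_ H]]] := Hstep k p q ho; apply: H.
Qed.

Lemma Gs_B k g : (k <= N)%N -> Gs k g -> inB g.
Proof.
elim: k => [|k IH] hk.
  by case: hrun => _ [HG0 _] /HG0.
by move=> /(Gs_succ _ hk) [hg _]; apply: IH => //; exact: ltnW.
Qed.

Lemma Gs_pres k g : (k < N)%N -> Gs k.+1 g -> forall p' q', (p', q') \in take k.+1 s ->
           conj g (As k.+1) p' q' = As k.+1 p' q'.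
Proof. by move=> hk /(Gs_succ _ hk) [_ H]. Qed.

Lemma Gs_intro k g : (k <= N)%N -> inB g ->
  (forall j, (j < k)%N -> forall p' q', (p', q') \in take j.+1 s ->
           conj g (As j.+1) p' q' = As j.+1 p' q') -> Gs k g.
Proof.
move=> + hg; elim: k => [|k IH] hk H.
  by case: hrun => _ [HG0 _]; apply/HG0.
apply/(Gs_succ _ hk); split; last exact: H.
by apply: IH => [|j jk]; [exact: ltnW | apply: H; exact: ltnW].
Qed.

Lemma step_cases k : (k < N)%N ->
  As k.+1 = As k \/ exists g, Gs k g /\ As k.+1 = conj g (As k).
Proof.
move=> /onth_ex [p [q ho]].
case: hrun => _ [_ [Hstep _]].
have [Ha [Hb [Hc _]]] := Hstep k p q ho.
pose vals := fun x : F => exists C, gsim (Gs k) (As k) C /\ C p q = x.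
case: (classic ((forall x, vals x -> x = 0) \/ (forall x, vals x))) => h1.
  by have [[g [hg ->]] _] := Ha h1; right; exists g.
case: (classic (forall x, vals x <-> x != 0)) => h2.
  by have [[g [hg ->]] _] := Hb h1 h2; right; exists g.
by left; apply: Hc.
Qed.

Lemma As_N k : (k <= N)%N -> inN (As k).
Proof.
elim: k => [|k IH] hk.
  by case: hrun => -> _.
have hk' : (k < N)%N by [].
case: (step_cases hk') => [->|[g [hg ->]]]; first exact: IH (ltnW hk).
apply: inN_conj; last exact: IH (ltnW hk).
exact: Gs_B (ltnW hk) hg.
Qed.

Lemma agree1 k : (k < N)%N -> forall p' q', (p', q') \in take k s ->
  As k.+1 p' q' = As k p' q'.
Proof.
move=> hk p' q' hx.
case: (step_cases hk) => [->//|[g [hg ->]]].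
case: k hk hx hg => [|k] hk; first by rewrite take0.
move=> hx hg; exact: Gs_pres (ltnW hk) hg p' q' hx.
Qed.

Lemma agree k : (k <= N)%N -> forall p' q', (p', q') \in take k s ->
  Ainf p' q' = As k p' q'.
Proof.
move=> hk p' q' hx.
suff H : forall m, (k <= m)%N -> (m <= N)%N -> As m p' q' = As k p' q'.
  by case: hrun => _ [_ [_ ->]]; apply: H.
elim=> [|m IH] km mN.
  by move: km; rewrite leqn0 => /eqP ->.
move: km; rewrite leq_eqVlt => /orP[/eqP <-//|]; rewrite ltnS => km.
rewrite agree1 //; first exact: IH (ltnW mN).
by move: hx; rewrite -(take_takel s km) => /mem_take.
Qed.


Lemma onth_lt k x : onth s k = Some x -> (k < N)%N.
Proof. by move=> ho; rewrite -onthTE ho. Qed.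

Lemma Ainf_eq : Ainf = As N.
Proof. by case: hrun => _ [_ [_ ->]]. Qed.

Lemma Ainf_N : inN Ainf.
Proof. by rewrite Ainf_eq; apply: As_N. Qed.

Lemma agree_pq k p q : onth s k = Some (p, q) -> Ainf p q = As k.+1 p q.
Proof.
move=> ho; have hk := onth_lt ho.
have hnth : nth (p, q) s k = (p, q) by apply: onth_nth.
apply: agree => //; rewrite -hnth; exact: nth_in_take.
Qed.

Lemma keyA k (p q r : 'I_n) : onth s k = Some (p, q) -> (p < r)%N -> Ainf r q != 0 ->
  (forall c : 'I_n, (c < q)%N -> Ainf r c = 0) -> Ainf p q = 0.
Proof.
move=> ho pr rq0 hrow; have hk := onth_lt ho.
have hnth : nth (p, q) s k = (p, q) by apply: onth_nth.
have hXN := As_N (ltnW hk).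
have rq : (r < q)%N.
  by rewrite ltnNge; apply/negP => h; move: rq0; rewrite Ainf_N ?eqxx.
have rqs : (r, q) \in s by rewrite bel_mem.
have rqk : (r, q) \in take k s.
  by apply: (bel_closed_nth (x0 := (p, q))) => //; rewrite hnth /belt /= pr.
have Xrq : As k r q = Ainf r q by rewrite (agree (ltnW hk) rqk).
have pr' : p != r by rewrite neq_ltn pr.
have hall : forall x, exists C, gsim (Gs k) (As k) C /\ C p q = x.
  move=> x; set t := (x - As k p q) / As k r q.
  exists (cj (g1 p r t) (As k)); split.
    exists (g1 p r t); split => //.
    apply: Gs_intro (ltnW hk) (g1_inB t pr) _ => j jk a b hab.
    have hj : (j.+1 <= N)%N by apply: leq_trans (ltnW hk).
    have habk : (a, b) \in take k s.
      by move: hab; rewrite -(take_takel s jk) => /mem_take.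
    have := bel_before (p, q) hk habk; rewrite hnth /belt /= => hpos.
    have pa : (p <= a)%N.
      by case/orP: hpos => [/ltnW //|/andP[/eqP -> _]].
    rewrite cj_g1 //; last exact: As_N.
    case: (a =P p) => [ap|_]; last by rewrite mul0r addr0.
    rewrite mul1r; suff -> : As j.+1 r b = 0 by rewrite mulr0 addr0.
    have bq : (b < q)%N.
      by case/orP: hpos => [|/andP[_ //]]; rewrite ap ltnn.
    case: (leqP b r) => br; first exact: (As_N hj).
    have rbs : (r, b) \in s by rewrite bel_mem.
    have : (r, b) \in take j.+1 s.
      by apply: (bel_closed rbs _ hab); rewrite /belt /= ap pr.
    by move/(agree hj) <-; apply: hrow.
  rewrite cj_g1 //.
  rewrite eqxx mul1r /t Xrq -mulrA mulVf // mulr1.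
  by rewrite addrC subrK.
case: hrun => _ [_ [Hstep _]].
have [Ha _] := Hstep k p q ho.
have [_ h0] := Ha (or_intror hall).
by rewrite (agree_pq ho) h0.
Qed.

Lemma keyB k (p q : 'I_n) : onth s k = Some (p, q) ->
  (forall c : 'I_n, (c < q)%N -> Ainf p c = 0) -> Ainf p q != 0 -> Ainf p q = 1.
Proof.
move=> ho hrow pq0; have hk := onth_lt ho.
have hnth : nth (p, q) s k = (p, q) by apply: onth_nth.
case: hrun => _ [_ [Hstep _]].
have [Ha [Hb [Hc _]]] := Hstep k p q ho.
pose vals := fun x : F => exists C, gsim (Gs k) (As k) C /\ C p q = x.
case: (classic ((forall x, vals x -> x = 0) \/ (forall x, vals x))) => h1.
  by have [_ h0] := Ha h1; move: pq0; rewrite (agree_pq ho) h0 eqxx.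
case: (classic (forall x, vals x <-> x != 0)) => h2.
  by have [_ h0] := Hb h1 h2; rewrite (agree_pq ho) h0.
exfalso; have E := Hc h1 h2.
have Xpq : As k p q = Ainf p q by rewrite (agree_pq ho) E.
have pq : (p < q)%N by rewrite ltnNge; apply/negP => h; move: pq0; rewrite Ainf_N ?eqxx.
have hnz : forall x, x != 0 -> vals x.
  move=> x x0; set t := x / As k p q.
  have t0 : t != 0 by rewrite /t mulf_neq0 // invr_eq0 Xpq.
  exists (cj (g2 p t) (As k)); split.
    exists (g2 p t); split => //.
    apply: Gs_intro (ltnW hk) (g2_inB p t0) _ => j jk a b hab.
    have hj : (j.+1 <= N)%N by apply: leq_trans (ltnW hk).
    have habk : (a, b) \in take k s.
      by move: hab; rewrite -(take_takel s jk) => /mem_take.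
    have := bel_before (p, q) hk habk; rewrite hnth /belt /= => hpos.
    have pa : (p <= a)%N.
      by case/orP: hpos => [/ltnW //|/andP[/eqP -> _]].
    have ab : (a < b)%N by rewrite -(bel_mem (a, b)) (mem_take hab).
    have bp : (b == p) = false.
      by apply/eqP => e; move: ab; rewrite e ltnNge pa.
    rewrite cj_g2 // bp mulr1.
    case: (a =P p) => [ap|_]; last by rewrite mul1r.
    have bq : (b < q)%N.
      by case/orP: hpos => [|/andP[_ //]]; rewrite ap ltnn.
    have : (p, b) \in take j.+1 s by rewrite -ap.
    by rewrite ap; move/(agree hj) <-; rewrite hrow // mulr0.
  rewrite cj_g2 // eqxx (_ : (q == p) = false) ?mulr1.
    by rewrite /t -mulrA mulVf ?mulr1 // Xpq.
  by apply/eqP => e; move: pq; rewrite e ltnn.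
apply: h2 => x; split; last exact: hnz.
move=> vx; apply/eqP => x0; subst x.
by apply: h1; right => y; case: (y =P 0) => [->//|/eqP]; exact: hnz.
Qed.

End Run.

Section Uniq.
Variables (F : fieldType) (n : nat).

Lemma sum_nz (f : 'I_n -> F) : \sum_k f k != 0 -> exists k, f k != 0.
Proof.
move=> h; case: (classic (exists k, f k != 0)) => // hn.
exfalso; move/eqP: h; apply; apply: big1 => k _.
by apply/eqP/negPn/negP => hk; apply: hn; exists k.
Qed.

Lemma subperm_one (Q : 'M[F]_n) i j : subperm_mx Q -> Q i j != 0 -> Q i j = 1.
Proof. by case=> h _ /eqP; case: (h i j). Qed.

Lemma subperm_rowsum (Q : 'M[F]_n) (M : 'M[F]_n) i j l : subperm_mx Q -> Q i l != 0 ->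
  (Q *m M) i j = M l j.
Proof.
move=> hQ hl; rewrite mxE (bigD1 l) //= big1 ?addr0.
  by rewrite (subperm_one hQ hl) mul1r.
move=> k kl; case: (Q i k =P 0) => [->|/eqP h]; first by rewrite mul0r.
by case: hQ => _ [hr _]; move: kl; rewrite (hr i k l h hl) eqxx.
Qed.

Lemma subperm_colsum (Q : 'M[F]_n) (M : 'M[F]_n) i j l : subperm_mx Q -> Q l j != 0 ->
  (M *m Q) i j = M i l.
Proof.
move=> hQ hl; rewrite mxE (bigD1 l) //= big1 ?addr0.
  by rewrite (subperm_one hQ hl) mulr1.
move=> k kl; case: (Q k j =P 0) => [->|/eqP h]; first by rewrite mulr0.
by case: hQ => _ [_ hc]; move: kl; rewrite (hc k l j h hl) eqxx.
Qed.

Lemma subperm_dc (P Q C B : 'M[F]_n) : subperm_mx P -> subperm_mx Q ->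
  inB C -> inB B -> P *m C = B *m Q -> forall i j, P i j != 0 -> Q i j != 0.
Proof.
move=> hP hQ [uC hC] [uB hB] E.
suff H : forall d (i : 'I_n), (n - i <= d)%N -> forall j, P i j != 0 -> Q i j != 0.
  by move=> i j; apply: (H n); rewrite leq_subr.
elim=> [|d IH] i hd j hij.
  by move: hd; rewrite leqn0 subn_eq0 leqNgt ltn_ord.
have X1 : (B *m Q) i j != 0.
  by rewrite -E (subperm_rowsum _ _ hP hij) upper_diag.
move: X1; rewrite mxE => /sum_nz [i0 hi0].
rewrite mulf_eq0 negb_or in hi0; case/andP: hi0 => Bii0 Qi0j.
case: (ltngtP i i0) => h; last first.
- by rewrite (val_inj h).
- by move: Bii0; rewrite hB ?eqxx.
exfalso.
have X2 : (P *m C) i0 j != 0.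
  by rewrite E (subperm_colsum _ _ hQ Qi0j) upper_diag.
move: X2; rewrite mxE => /sum_nz [j0 hj0].
rewrite mulf_eq0 negb_or in hj0; case/andP: hj0 => Pi0j0 Cj0j.
have Qi0j0 : Q i0 j0 != 0.
  apply: IH Pi0j0; have := ltn_ord i0; move: hd h; clear; lia.
case: hQ => _ [hr _]; have ejj := hr i0 j j0 Qi0j Qi0j0.
case: hP => _ [_ hc]; have := hc i i0 j hij; rewrite ejj => /(_ Pi0j0) e.
by move: h; rewrite e ltnn.
Qed.

End Uniq.

Section Final.
Variables (F : fieldType) (n : nat).

Lemma onth_index (x : 'I_n * 'I_n) : x \in bel_positions n ->
  onth (bel_positions n) (index x (bel_positions n)) = Some x.
Proof.
move=> hx; rewrite onthE (nth_map x) ?index_mem // nth_index //.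
Qed.

Variable A : 'M[F]_n.
Hypothesis hAN : inN A.
Hypothesis F1 : forall p q : 'I_n, (forall c : 'I_n, (c < q)%N -> A p c = 0) ->
  A p q != 0 -> A p q = 1.
Hypothesis F2 : forall p r q : 'I_n, (p < r)%N -> A r q != 0 ->
  (forall c : 'I_n, (c < q)%N -> A r c = 0) -> A p q = 0.

Definition isLead (i j : 'I_n) : bool :=
  (A i j != 0) && [forall c : 'I_n, (c < j)%N ==> (A i c == 0)].

Lemma isLeadP i j : isLead i j -> A i j != 0 /\ forall c : 'I_n, (c < j)%N -> A i c = 0.
Proof.
by case/andP => h /forallP H; split => // c cj; apply/eqP; move: (H c); rewrite cj.
Qed.

Lemma lead_one i j : isLead i j -> A i j = 1.
Proof. by case/isLeadP => h1 h2; apply: F1. Qed.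

Lemma lead_row i j j' : isLead i j -> isLead i j' -> j = j'.
Proof.
move=> /isLeadP [h1 h2] /isLeadP [h1' h2'].
case: (ltngtP j j') => h; last exact: val_inj.
- by move: h1; rewrite h2' ?eqxx.
- by move: h1'; rewrite h2 ?eqxx.
Qed.

Lemma lead_col i i' j : isLead i j -> isLead i' j -> i = i'.
Proof.
move=> /isLeadP [h1 h2] /isLeadP [h1' h2'].
case: (ltngtP i i') => h; last exact: val_inj.
- by move: h1; rewrite (F2 h h1' h2') eqxx.
- by move: h1'; rewrite (F2 h h1 h2) eqxx.
Qed.

Lemma nolead_zero i : (forall j, ~~ isLead i j) -> forall j, A i j = 0.
Proof.
move=> hn j; apply/eqP/negPn/negP => hj.
have [m Pm mmin] := @arg_minnP _ j (fun c => A i c != 0) (fun c => nat_of_ord c) hj.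
have := hn m; rewrite /isLead Pm /=; move/forallP => [] c.
apply/implyP => cm; apply/negPn/negP => hc.
by have := mmin c hc; rewrite leqNgt cm.
Qed.

Definition Qp : 'M[F]_n := \matrix_(i, j) (if isLead i j then 1 else 0).
Definition Up : 'M[F]_n := \matrix_(i, j)
  (if [pick p | isLead p i] is Some p then A p j else (i == j)%:R).

Lemma Qp_subperm : subperm_mx Qp.
Proof.
split; first by move=> i j; rewrite mxE; case: ifP; [right|left].
split.
  move=> i j j'; rewrite !mxE; case: ifP => h1; case: ifP => h2; rewrite ?eqxx //=.
  by move=> _ _; exact: lead_row h1 h2.
move=> i i' j; rewrite !mxE; case: ifP => h1; case: ifP => h2; rewrite ?eqxx //=.
by move=> _ _; exact: lead_col h1 h2.
Qed.

Lemma Up_inU : inU Up.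
Proof.
split.
  move=> i j ji; rewrite mxE; case: pickP => [p hp|_].
    by case/isLeadP: hp => _ ->.
  have ij : (i == j) = false by apply/eqP => e; move: ji; rewrite e ltnn.
  by rewrite ij.
move=> i; rewrite mxE; case: pickP => [p hp|_]; last by rewrite eqxx.
exact: lead_one.
Qed.

Lemma A_QU : A = Qp *m Up.
Proof.
apply/matrixP => i j.
case: (pickP (isLead i)) => [l hl|hn].
  rewrite (subperm_rowsum _ _ Qp_subperm (l := l)); last by rewrite mxE hl oner_neq0.
  rewrite mxE; case: pickP => [p hp|hn]; last by move: (hn i); rewrite hl.
  by rewrite (lead_col hp hl).
rewrite (nolead_zero (fun j => negbT (hn j))) mxE big1 // => k _.
by rewrite mxE hn mul0r.
Qed.

End Final.

Unset Implicit Arguments.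
Set Strict Implicit.

Theorem theorem2p5 (F : fieldType) (n : nat) (A Q : 'M[F]_n) :
  inN A -> belitskii_canonical A ->
  subperm_mx Q ->
  (exists B B' : 'M[F]_n, inB B /\ inB B' /\ A = B *m Q *m B') ->
  exists U : 'M[F]_n, inU U /\ A = Q *m U.
Proof.
move=> hAN [A0 [As [Gs [hA0 hrun]]]] hQ [B [B' [hB [hB' EA]]]].
have F1 : forall p q : 'I_n, (forall c : 'I_n, (c < q)%N -> A p c = 0) ->
    A p q != 0 -> A p q = 1.
  move=> p q hrow hpq.
  have pq : (p < q)%N by rewrite ltnNge; apply/negP => h; move: hpq; rewrite hAN ?eqxx.
  have hx : (p, q) \in bel_positions n by rewrite bel_mem.
  exact: (keyB hrun hA0 (onth_index hx)).
have F2 : forall p r q : 'I_n, (p < r)%N -> A r q != 0 ->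
    (forall c : 'I_n, (c < q)%N -> A r c = 0) -> A p q = 0.
  move=> p r q pr hrq hrow.
  case: (ltnP p q) => pq; last exact: hAN.
  have hx : (p, q) \in bel_positions n by rewrite bel_mem.
  exact: (keyA hrun hA0 (onth_index hx) pr hrq hrow).
set P := Qp A; set U := Up A.
have hPU : A = P *m U by apply: A_QU.
have hP : subperm_mx P by apply: Qp_subperm.
have hU := Up_inU F1.
have hUB : inB U.
  case: hU => hl hd; split => //.
  rewrite unitmxE -det_tr det_trig; last by apply/is_trig_mxP => a b ab; rewrite mxE hl.
  by rewrite unitfE; apply/prodf_neq0 => i _; rewrite mxE hd oner_neq0.
have E1 : P *m (U *m invmx B') = B *m Q.
  case: hB' => uB' _.
  by rewrite mulmxA -hPU EA mulmxK.
have hC : inB (U *m invmx B') by apply: inB_mul => //; apply: inB_inv.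
have E2 : Q *m invmx (U *m invmx B') = invmx B *m P.
  case: hB => uB _; case: hC => uC _.
  by rewrite -(mulmxK uC P) E1 !mulmxA mulVmx // mul1mx.
have d1 := subperm_dc hP hQ hC hB E1.
have d2 := subperm_dc hQ hP (inB_inv hC) (inB_inv hB) E2.
have -> : Q = P.
  apply/matrixP => i j.
  case: (Q i j =P 0) => [q0|/eqP q0].
    case: (P i j =P 0) => [->//|/eqP p0]; by move: (d1 i j p0); rewrite q0 eqxx.
  by rewrite (subperm_one hQ q0) (subperm_one hP (d2 i j q0)).
by exists U.
Qed.
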